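(* Let $D\geq 2$, let $\{|i\rangle\}_{i=0}^{D-1}$ be an orthonormal basis of $\mathbb{C}^D$, and define $P=\sum_{i,j}|i\rangle\langle j|\otimes|j\rangle\langle i|$, $P_{sym}=\frac12(I_{D^2}+P)$, $P_{as}=\frac12(I_{D^2}-P)$, and for $0\leq p\leq 1$ the Werner state $\rho_W=p\frac{2}{D^2+D}P_{sym}+(1-p)\frac{2}{D^2-D}P_{as}$ on $\mathbb{C}^D\otimes\mathbb{C}^D$. Then $$d_{\max}(\rho_W)=\frac{|2pD-D-1|}{D^2-1},$$ and this maximum is attained by every traceless unitary $U^B$ on $\mathbb{C}^D$.
   Context: For a state $\rho$ on $\mathbb{C}^M\otimes\mathbb{C}^N$ let $\rho_B=\mathrm{Tr}_A(\rho)$. A unitary $U^B$ on $\mathbb{C}^N$ is called cyclic for $\rho$ if $[\rho_B,U^B]=0$. Set $\rho_f=(I\otimes U^B)\rho(I\otimes U^{B\dagger})$ and define the Fu distance $d(\rho,U^B)=\frac{1}{\sqrt2}\|\rho-\rho_f\|_F$ (Frobenius norm $\|X\|_F=\sqrt{\mathrm{Tr}(X^\dagger X)}$). Define $d_{\max}(\rho)=\max\{d(\rho,U^B): U^B \text{ unitary},\ [\rho_B,U^B]=0\}$. *)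

(* Defs.v *)
From HB Require Import structures.
From mathcomp Require Import all_boot all_order all_algebra all_reals.
From mathcomp Require Import complex mxtens.
Set Implicit Arguments.
Unset Strict Implicit.
Unset Printing Implicit Defensive.
Import Order.TTheory GRing.Theory Num.Theory.
Import Num.Def.
Local Open Scope ring_scope.
Local Open Scope complex_scope.

Section QDefs.
Variable R : realType.
Local Notation C := R[i].

Definition adjmx {m n : nat} (X : 'M[C]_(m, n)) : 'M[C]_(n, m) :=
  (map_mx Num.conj X)^T.

Definition unitaryC {n : nat} (U : 'M[C]_n) : Prop :=
  U *m adjmx U = 1%:M /\ adjmx U *m U = 1%:M.

Definition frob {m n : nat} (X : 'M[C]_(m, n)) : C :=
  2.-root (\tr (adjmx X *m X)).

(* partial trace over the first factor A of C^M (x) C^N, with the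
   Kronecker indexing convention of mxtens (index (i,j) <-> |i>|j>) *)
Definition ptraceA {M N : nat} (rho : 'M[C]_(M * N)) : 'M[C]_N :=
  \matrix_(j, k) \sum_(i < M) rho (mxtens_index (i, j)) (mxtens_index (i, k)).

Definition cyclic_unitary {M N : nat} (rho : 'M[C]_(M * N)) (U : 'M[C]_N)
  : Prop := unitaryC U /\ ptraceA rho *m U = U *m ptraceA rho.

Definition rho_f {M N : nat} (rho : 'M[C]_(M * N)) (U : 'M[C]_N)
  : 'M[C]_(M * N) :=
  ((1%:M : 'M[C]_M) *t U) *m rho *m ((1%:M : 'M[C]_M) *t adjmx U).

Definition fu_dist {M N : nat} (rho : 'M[C]_(M * N)) (U : 'M[C]_N) : C :=
  frob (rho - rho_f rho U) / 2.-root 2.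

Definition is_dmax {M N : nat} (rho : 'M[C]_(M * N)) (v : C) : Prop :=
  (exists U, cyclic_unitary rho U /\ fu_dist rho U = v) /\
  (forall U, cyclic_unitary rho U -> fu_dist rho U <= v).

Definition swapP (D : nat) : 'M[C]_(D * D) :=
  \sum_(i < D) \sum_(j < D) (delta_mx i j *t delta_mx j i).

Definition Psym (D : nat) : 'M[C]_(D * D) := 2^-1 *: (1%:M + swapP D).
Definition Pas (D : nat) : 'M[C]_(D * D) := 2^-1 *: (1%:M - swapP D).

Definition werner (D : nat) (p : R) : 'M[C]_(D * D) :=
  (p%:C * 2 / (D%:R ^+ 2 + D%:R)) *: Psym D
  + ((1 - p)%:C * 2 / (D%:R ^+ 2 - D%:R)) *: Pas D.

End QDefs.

(* Main.v *)
Require Import Defs.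
From HB Require Import structures.
From mathcomp Require Import all_boot all_order all_algebra all_reals.
From mathcomp Require Import complex mxtens.
From mathcomp Require Import ring lra zify.
From mathcomp Require Import fingroup perm.
Import Order.TTheory GRing.Theory Num.Theory.
Local Open Scope ring_scope.

Section Aux.
Variable R : realType.
Local Notation C := (R[i]).

Lemma sum_tens m n (F : 'I_(m*n) -> C) :
  \sum_k F k = \sum_(i < m) \sum_(j < n) F (mxtens_index (i,j)).
Proof.
rewrite pair_big (reindex (@mxtens_index m n)) /=.
  by apply: eq_bigr => -[i j].
by exists (@mxtens_unindex m n) => k _; rewrite (mxtens_indexK, mxtens_unindexK).
Qed.

Lemma natr_andb (b1 b2 : bool) : ((b1 && b2)%:R : C) = b1%:R * b2%:R.
Proof. by case: b1; case: b2; rewrite ?mulr1 ?mulr0 ?mul0r. Qed.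

Lemma sum_dl n (F : 'I_n -> C) a : \sum_i ((a == i)%:R * F i) = F a.
Proof.
rewrite (bigD1 a) //= eqxx mul1r big1 ?addr0 // => i /negPf.
by rewrite eq_sym => ->; rewrite mul0r.
Qed.

Lemma sum_dr n (F : 'I_n -> C) a : \sum_i ((i == a)%:R * F i) = F a.
Proof. by rewrite -(sum_dl _ F a); apply: eq_bigr => i _; rewrite eq_sym. Qed.

Lemma idx_eq m n (a c : 'I_m) (b d : 'I_n) :
  (mxtens_index (a, b) == mxtens_index (c, d)) = (a == c) && (b == d).
Proof.
apply/idP/idP => [/eqP h | /andP [/eqP hac /eqP hbd]]; last by rewrite hac hbd.
have := congr1 (@mxtens_unindex m n) h; rewrite !mxtens_indexK => hh; case: hh => hac hbd.
by rewrite hac hbd !eqxx.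
Qed.

Lemma oneE n (a c b d : 'I_n) :
  (1%:M : 'M[C]_(n*n)) (mxtens_index (a, b)) (mxtens_index (c, d)) =
  (a == c)%:R * (b == d)%:R.
Proof. by rewrite mxE idx_eq natr_andb. Qed.

Lemma swapPE n (a b c d : 'I_n) :
  swapP R n (mxtens_index (a, b)) (mxtens_index (c, d)) =
  (a == d)%:R * (b == c)%:R.
Proof.
rewrite /swapP summxE.
under eq_bigr do rewrite summxE.
under eq_bigr do under eq_bigr do rewrite tensmxE !mxE !natr_andb.
rewrite (bigD1 a) //= [X in _ + X]big1 ?addr0; last first.
  move=> i /negPf; rewrite eq_sym => ->; apply: big1 => j _; by rewrite !(mul0r, mulr0).
rewrite eqxx (bigD1 c) //= [X in _ + X]big1 ?addr0; last first.
  move=> j /negPf; rewrite eq_sym => ->; by rewrite !(mul0r, mulr0).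
rewrite eqxx.
by rewrite mul1r mul1r [d == a]eq_sym mulrC.
Qed.

Lemma sum_only n (F : 'I_n -> C) a :
  (forall i, (i == a) = false -> (a == i) = false -> F i = 0) ->
  \sum_i F i = F a.
Proof.
move=> h; rewrite (bigD1 a) //= big1 ?addr0 // => i hi.
apply: h; first exact: negPf.
by rewrite eq_sym; exact: negPf.
Qed.

Lemma split4 n (f g h k : 'I_n -> C) :
  \sum_i (f i - g i - h i + k i) =
  \sum_i f i - \sum_i g i - \sum_i h i + \sum_i k i.
Proof. by rewrite big_split /= !sumrB. Qed.

Definition sum4 n (F : 'I_n -> 'I_n -> 'I_n -> 'I_n -> C) :=
  \sum_(c < n) \sum_(d < n) \sum_(a < n) \sum_(b < n) F c d a b.
Arguments sum4 {n}.

Lemma sum4_ext n (F G : 'I_n -> 'I_n -> 'I_n -> 'I_n -> C) :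
  (forall c d a b, F c d a b = G c d a b) -> sum4 F = sum4 G.
Proof.
move=> h; apply: eq_bigr => c _; apply: eq_bigr => d _; apply: eq_bigr => a _.
by apply: eq_bigr => b _.
Qed.

Lemma sum4_split n (F1 F2 F3 F4 : 'I_n -> 'I_n -> 'I_n -> 'I_n -> C) :
  sum4 (fun c d a b => F1 c d a b - F2 c d a b - F3 c d a b + F4 c d a b) =
  sum4 F1 - sum4 F2 - sum4 F3 + sum4 F4.
Proof.
rewrite /sum4 -split4; apply: eq_bigr => c _.
rewrite -split4; apply: eq_bigr => d _.
rewrite -split4; apply: eq_bigr => a _.
by rewrite -split4.
Qed.

Lemma sum4Z n k (F : 'I_n -> 'I_n -> 'I_n -> 'I_n -> C) :
  sum4 (fun c d a b => k * F c d a b) = k * sum4 F.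
Proof.
rewrite /sum4 mulr_sumr; apply: eq_bigr => c _.
rewrite mulr_sumr; apply: eq_bigr => d _.
rewrite mulr_sumr; apply: eq_bigr => a _.
by rewrite mulr_sumr.
Qed.

Lemma tr_adj n (X : 'M[C]_(n * n)) :
  \tr (adjmx X *m X) = sum4 (fun c d a b =>
    Num.conj (X (mxtens_index (a, b)) (mxtens_index (c, d))) *
    X (mxtens_index (a, b)) (mxtens_index (c, d))).
Proof.
rewrite /mxtrace sum_tens; apply: eq_bigr => c _; apply: eq_bigr => d _.
rewrite mxE sum_tens; apply: eq_bigr => a _; apply: eq_bigr => b _.
by rewrite /adjmx !mxE.
Qed.

Lemma one_tens n : (1%:M : 'M[C]_n) *t (1%:M : 'M[C]_n) = 1%:M.
Proof.
apply/matrixP => k l; case: (mxtens_indexP k) => a b; case: (mxtens_indexP l) => c d.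
by rewrite tensmxE oneE !mxE.
Qed.

Definition Qm n (U : 'M[C]_n) : 'M[C]_(n * n) :=
  \matrix_(k, l) (U (mxtens_unindex k).2 (mxtens_unindex l).1 *
     Num.conj (U (mxtens_unindex l).2 (mxtens_unindex k).1)).
Arguments Qm {n}.

Lemma QmE n (U : 'M[C]_n) a b c d :
  Qm U (mxtens_index (a, b)) (mxtens_index (c, d)) = U b c * Num.conj (U d a).
Proof. by rewrite mxE !mxtens_indexK. Qed.

Lemma L1 n (U : 'M[C]_n) a b c d :
  (((1%:M : 'M[C]_n) *t U) *m swapP R n) (mxtens_index (a, b)) (mxtens_index (c, d))
  = (a == d)%:R * U b c.
Proof.
rewrite mxE sum_tens (sum_only _ _ a); last first.
  move=> i h1 h2; apply: big1 => j _.
  by rewrite tensmxE !mxE h2 !(mul0r, mulr0).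
rewrite (sum_only _ _ c); last first.
  move=> j h1 h2; by rewrite tensmxE swapPE h1 !(mul0r, mulr0).
by rewrite tensmxE swapPE !mxE !eqxx !(mul1r, mulr1) mulrC.
Qed.

Lemma rhoQ n (U : 'M[C]_n) :
  ((1%:M : 'M[C]_n) *t U) *m swapP R n *m ((1%:M : 'M[C]_n) *t adjmx U) = Qm U.
Proof.
apply/matrixP => k l; case: (mxtens_indexP k) => a b; case: (mxtens_indexP l) => c d.
rewrite QmE mxE sum_tens (sum_only _ _ c); last first.
  move=> i h1 h2; apply: big1 => j _.
  by rewrite L1 tensmxE !mxE h1 !(mul0r, mulr0).
rewrite (sum_only _ _ a); last first.
  move=> j h1 h2; by rewrite L1 h2 !(mul0r, mulr0).
by rewrite L1 tensmxE /adjmx !mxE !eqxx !(mul1r, mulr1).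
Qed.
End Aux.
Arguments Qm {R n}.
Arguments sum4 {R n}.

Local Open Scope complex_scope.

Section Main.
Variable R : realType.
Local Notation C := (R[i]).
Variable D : nat.
Variable p : R.

Definition wa : C := p%:C * 2 / (D%:R ^+ 2 + D%:R).
Definition wb : C := (1 - p)%:C * 2 / (D%:R ^+ 2 - D%:R).
Definition al : C := (wa + wb) / 2.
Definition be : C := (wa - wb) / 2.

Lemma werner_dec : werner D p = al *: 1%:M + be *: swapP R D.
Proof.
apply/matrixP => i j; rewrite /werner /Psym /Pas !mxE -/wa -/wb /al /be.
set x := (_ *+ _); set y := swapP R D i j.
ring.
Qed.

Lemma ptr_werner : ptraceA (werner D p) = (al * D%:R + be)%:M.
Proof.
apply/matrixP => j k; rewrite werner_dec !mxE.
under eq_bigr do rewrite !mxE idx_eq natr_andb swapPE.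
rewrite big_split /= [X in X + _](eq_bigr (fun _ => al * (j == k)%:R)); last first.
  by move=> i _; rewrite eqxx mul1r.
rewrite [X in _ + X](sum_only _ _ _ k); last first.
  by move=> i h1 h2; rewrite h1 !(mul0r, mulr0).
rewrite sumr_const card_ord eqxx mul1r.
case: (j == k); rewrite ?mulr0 ?mulr1 ?mulr0n ?mulr1n //.
by rewrite mulr_natr.
by rewrite mul0rn add0r.
Qed.

Lemma rhof_dec (U : 'M[C]_D) : unitaryC U ->
  rho_f (werner D p) U = al *: 1%:M + be *: Qm U.
Proof.
case=> hU1 hU2.
rewrite /rho_f werner_dec mulmxDr mulmxDl -!scalemxAr -!scalemxAl mulmx1.
by rewrite tensmx_mul mulmx1 hU1 one_tens rhoQ.
Qed.

End Main.

Section Sums.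
Variable R : realType.
Local Notation C := (R[i]).
Variable n : nat.
Variable U : 'M[C]_n.

Definition Pe (c d a b : 'I_n) : C := (a == d)%:R * (b == c)%:R.
Definition Qe (c d a b : 'I_n) : C := U b c * Num.conj (U d a).

Lemma S1 : sum4 (fun c d a b => Pe c d a b * Pe c d a b) = n%:R ^+ 2.
Proof.
rewrite /sum4 (eq_bigr (fun _ => n%:R)); first by rewrite sumr_const card_ord expr2 mulr_natr.
move=> c _; rewrite (eq_bigr (fun _ => 1)); first by rewrite sumr_const card_ord.
move=> d _; rewrite (sum_only _ _ _ d); last first.
  by move=> a h1 h2; apply: big1 => b _; rewrite /Pe h1 !(mul0r, mulr0).
rewrite (sum_only _ _ _ c); last first.
  by move=> b h1 h2; rewrite /Pe h1 !(mul0r, mulr0).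
by rewrite /Pe !eqxx !(mul1r, mulr1).
Qed.

Lemma S2 : sum4 (fun c d a b => Pe c d a b * Qe c d a b) = \tr U * Num.conj (\tr U).
Proof.
rewrite /sum4 /mxtrace rmorph_sum mulr_suml; apply: eq_bigr => c _.
rewrite mulr_sumr; apply: eq_bigr => d _.
rewrite (sum_only _ _ _ d); last first.
  by move=> a h1 h2; apply: big1 => b _; rewrite /Pe h1 !(mul0r, mulr0).
rewrite (sum_only _ _ _ c); last first.
  by move=> b h1 h2; rewrite /Pe h1 !(mul0r, mulr0).
by rewrite /Pe /Qe !eqxx !(mul1r, mulr1).
Qed.

Lemma S3 : sum4 (fun c d a b => Num.conj (Qe c d a b) * Pe c d a b) =
  Num.conj (\tr U) * \tr U.
Proof.
rewrite /sum4 /mxtrace rmorph_sum mulr_suml; apply: eq_bigr => c _.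
rewrite mulr_sumr; apply: eq_bigr => d _.
rewrite (sum_only _ _ _ d); last first.
  by move=> a h1 h2; apply: big1 => b _; rewrite /Pe h1 !(mul0r, mulr0).
rewrite (sum_only _ _ _ c); last first.
  by move=> b h1 h2; rewrite /Pe h1 !(mul0r, mulr0).
by rewrite /Pe /Qe !eqxx !(mul1r, mulr1) rmorphM /= conjCK.
Qed.

Lemma S4 : unitaryC U ->
  sum4 (fun c d a b => Num.conj (Qe c d a b) * Qe c d a b) = n%:R ^+ 2.
Proof.
case=> hU1 hU2.
have row d : \sum_a (U d a * Num.conj (U d a)) = 1.
  transitivity ((U *m adjmx U) d d); last by rewrite hU1 mxE eqxx.
  rewrite mxE.
  by apply: eq_bigr => a _; rewrite /adjmx !mxE.
have col c : \sum_b (Num.conj (U b c) * U b c) = 1.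
  transitivity ((adjmx U *m U) c c); last by rewrite hU2 mxE eqxx.
  rewrite mxE.
  by apply: eq_bigr => a _; rewrite /adjmx !mxE.
rewrite /sum4 (eq_bigr (fun _ => n%:R)); first by rewrite sumr_const card_ord expr2 mulr_natr.
move=> c _; rewrite (eq_bigr (fun _ => 1)); first by rewrite sumr_const card_ord.
move=> d _.
rewrite (eq_bigr (fun a => (U d a * Num.conj (U d a)) * \sum_b (Num.conj (U b c) * U b c))).
  by rewrite col; under eq_bigr do rewrite mulr1; apply: row.
move=> a _; rewrite mulr_sumr; apply: eq_bigr => b _.
rewrite /Qe rmorphM /= conjCK; ring.
Qed.

Lemma S_full : unitaryC U ->
  sum4 (fun c d a b => Num.conj (Pe c d a b - Qe c d a b) * (Pe c d a b - Qe c d a b))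
  = 2 * (n%:R ^+ 2 - \tr U * Num.conj (\tr U)).
Proof.
move=> hU.
rewrite (@sum4_ext R n _ (fun c d a b => Pe c d a b * Pe c d a b - Pe c d a b * Qe c d a b
   - Num.conj (Qe c d a b) * Pe c d a b + Num.conj (Qe c d a b) * Qe c d a b)); last first.
  move=> c d a b; rewrite rmorphB /=.
  have -> : Num.conj (Pe c d a b) = Pe c d a b by rewrite /Pe rmorphM !rmorph_nat.
  ring.
rewrite sum4_split S1 S2 S3 S4 //; ring.
Qed.

Lemma S_ge0 : 0 <= sum4 (fun c d a b => Num.conj (Pe c d a b - Qe c d a b) * (Pe c d a b - Qe c d a b)).
Proof.
apply: sumr_ge0 => c _; apply: sumr_ge0 => d _; apply: sumr_ge0 => a _.
apply: sumr_ge0 => b _; rewrite mulrC; exact: mul_conjC_ge0.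
Qed.

End Sums.

Section Final.
Variable R : realType.
Local Notation C := (R[i]).
Variable D : nat.
Variable p : R.

Lemma diff_dec (U : 'M[C]_D) : unitaryC U ->
  werner D p - rho_f (werner D p) U = be R D p *: (swapP R D - Qm U).
Proof.
move=> hU; rewrite rhof_dec // werner_dec scalerBr opprD addrACA subrr add0r.
by [].
Qed.

Lemma tr_val (U : 'M[C]_D) : unitaryC U ->
  \tr (adjmx (werner D p - rho_f (werner D p) U) *m (werner D p - rho_f (werner D p) U))
  = Num.conj (be R D p) * be R D p * (2 * (D%:R ^+ 2 - \tr U * Num.conj (\tr U))).
Proof.
move=> hU; rewrite diff_dec // tr_adj -(@S_full R D U hU) -sum4Z.
apply: sum4_ext => c d a b.
rewrite !mxE swapPE !mxtens_indexK /Pe /Qe rmorphM /=; ring.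
Qed.

Lemma Z_ge0 (U : 'M[C]_D) : unitaryC U ->
  0 <= D%:R ^+ 2 - \tr U * Num.conj (\tr U).
Proof.
move=> hU; have := @S_ge0 R D U; rewrite S_full // pmulr_rge0 //.
Qed.

Lemma fu_val (U : 'M[C]_D) : unitaryC U ->
  fu_dist (werner D p) U = `|be R D p| * 2.-root (D%:R ^+ 2 - \tr U * Num.conj (\tr U)).
Proof.
move=> hU; rewrite /fu_dist /frob tr_val // -normCKC.
have h2 : (0 : C) <= 2 by [].
rewrite rootCMl ?exprn_ge0 // exprCK // rootCMl //.
have hn : sqrtC (2 : C) != 0 by rewrite rootC_eq0 // pnatr_eq0.
by rewrite [sqrtC 2 * _]mulrC mulrA mulfK.
Qed.

End Final.

Lemma be_val (R : realType) (D : nat) (p : R) : (2 <= D)%N ->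
  `|be R D p| * D%:R = (`|2 * p * D%:R - D%:R - 1| / (D%:R ^+ 2 - 1))%:C.
Proof.
move=> hD.
set r : R := (p * 2 / (D%:R ^+ 2 + D%:R) - (1 - p) * 2 / (D%:R ^+ 2 - D%:R)) / 2.
have -> : be R D p = r%:C.
  rewrite /be /wa /wb /r.
  by rewrite !(rmorphB, rmorphM, rmorphD, fmorphV, rmorphXn, rmorph_nat, rmorph1).
have -> : `|r%:C| = `|r|%:C.
  by rewrite normc_def /= !expr2 mul0r addr0 -expr2 sqrtr_sqr.
have -> : (D%:R : R[i]) = (D%:R : R)%:C by rewrite rmorph_nat.
rewrite -rmorphM; congr (_ %:C).
have hd : (2 : R) <= D%:R by rewrite (ler_nat R 2 D).
set d : R := D%:R in hd *.
have hd0 : 0 <= d by lra.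
have hq : 0 < d ^+ 2 - 1 by nra.
rewrite -[X in _ * X](ger0_norm hd0) -normrM.
rewrite -[X in _ / X](ger0_norm (ltW hq)) -normf_div; congr (`| _ |).
rewrite /r; field.
have h1 : d ^+ 2 + d != 0 by apply/lt0r_neq0; nra.
have h2 : d ^+ 2 - d != 0 by apply/lt0r_neq0; nra.
have h3 : d ^+ 2 - 1 != 0 by apply/lt0r_neq0.
by rewrite h1 h2 h3.
Qed.

Lemma perm_unitary (R : realType) (n : nat) (s : 'S_n) :
  unitaryC (perm_mx s : 'M[R[i]]_n).
Proof.
have hA : adjmx (perm_mx s : 'M[R[i]]_n) = perm_mx s^-1.
  rewrite /adjmx -tr_perm_mx; congr (_^T).
  by apply/matrixP => i j; rewrite !mxE rmorph_nat.
by rewrite /unitaryC hA -!perm_mxM mulgV mulVg perm_mx1.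
Qed.

Lemma ordS_neq (n : nat) (i : 'I_n) : (2 <= n)%N -> ordS i != i.
Proof.
move=> hn; apply/eqP => /(congr1 val) /=.
have := ltn_ord i; rewrite leq_eqVlt => /orP [/eqP hi|hi].
  rewrite hi modnn => h0; lia.
rewrite modn_small // => h; lia.
Qed.

Lemma tr_cyc (R : realType) (n : nat) : (2 <= n)%N ->
  \tr (perm_mx (perm (@ordS_inj n)) : 'M[R[i]]_n) = 0.
Proof.
move=> hn; rewrite /mxtrace big1 // => i _.
rewrite perm_mxEsub !mxE permE.
by rewrite (negPf (@ordS_neq n i hn)).
Qed.

Theorem theorem2 (R : realType) (D : nat) (p : R) :
  (2 <= D)%N -> 0 <= p <= 1 ->
  is_dmax (werner D p)
    ((`|2 * p * D%:R - D%:R - 1| / (D%:R ^+ 2 - 1))%:C) /\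
  (forall U : 'M[R[i]]_D, unitaryC U -> \tr U = 0 ->
     fu_dist (werner D p) U =
       (`|2 * p * D%:R - D%:R - 1| / (D%:R ^+ 2 - 1))%:C).
Proof.
move=> hD _.
have trace0 : forall U : 'M[R[i]]_D, unitaryC U -> \tr U = 0 ->
     fu_dist (werner D p) U =
       (`|2 * p * D%:R - D%:R - 1| / (D%:R ^+ 2 - 1))%:C.
  move=> U hU ht; rewrite fu_val // ht mul0r subr0 exprCK ?ler0n //.
  exact: be_val.
split=> //; split.
  exists (perm_mx (perm (@ordS_inj D))); split; last first.
    by apply: trace0; [apply: perm_unitary | apply: tr_cyc].
  split; first exact: perm_unitary.
  by rewrite ptr_werner scalar_mxC.
move=> U [hU _]; rewrite fu_val // -be_val //.
apply: ler_wpM2l => //.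
rewrite -[X in _ <= X](@exprCK _ 2 (D%:R)) ?ler0n //.
rewrite ler_rootCl //; last by rewrite qualifE /= Z_ge0.
by rewrite lerBlDr lerDl mul_conjC_ge0.
Qed.
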